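(* Suppose the dynamic deficiency of the network is $1$ and that the network has a positive steady state $x^*\in\mathbb{R}_{>0}^n$. Let $C_1,\dots,C_k$ (after reordering) be the complexes that do not lie in any terminal strongly connected component of $G$, and let $\chi\in\ker M\setminus\ker\mathcal{L}(G)$. Then $\chi_i\neq0$ for $1\le i\le k$, and for every steady state $x$ and every $2\le i\le k$, \[x^{C_i}=\frac{\chi_i}{\chi_1}\,x^{C_1},\] each of these being a type 1 complex-linear invariant on $C_1,\dots,C_k$.
   Context: Setup: species $S_1,\dots,S_n$, concentrations $x$, complexes $C_1,\dots,C_m\in\mathbb{Z}_{\ge0}^n$, reaction graph $G$ on complexes with positive edge labels $\kappa_{ij}$. Laplacian $\mathcal{L}(G)$: $\mathcal{L}(G)_{ji}=\kappa_{ij}$ for edges $C_i\to C_j$, other off-diagonal entries $0$, $\mathcal{L}(G)_{ii}=-\sum_j\kappa_{ij}$. $Y$ is the $n\times m$ matrix with columns $C_i$; $x^C=\prod_jx_j^{C(S_j)}$, $\Psi(x)=(x^{C_1},\dots,x^{C_m})^\top$; dynamics $dx/dt=Y\mathcal{L}(G)\Psi(x)$; $M=Y\mathcal{L}(G)$; steady state means $M\Psi(x)=0$. A strongly connected component of $G$ is a maximal subgraph in which any two nodes are joined by directed paths in both directions; it is terminal if no edge leaves it. $\ker\mathcal{L}(G)$ is spanned by vectors each supported on the nodes of a single terminal strongly connected component. The dynamic deficiency is $\delta_D=\dim\ker M-\dim\ker\mathcal{L}(G)$. A type 1 complex-linear invariant on $C_1,\dots,C_k$ is a polynomial $a_1x^{C_1}+\dots+a_kx^{C_k}$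 with $(a_1,\dots,a_k,0,\dots,0)$ in the row span of $M$. *)

(* Defs.v *)
From HB Require Import structures.
From mathcomp Require Import all_boot all_order all_algebra.
Set Implicit Arguments. Unset Strict Implicit. Unset Printing Implicit Defensive.
Import Order.TTheory GRing.Theory Num.Theory.
Local Open Scope ring_scope.

(* A reaction network with n species and m complexes over a real field R:
   - Y : 'M[nat]_(n, m), column i is the complex C_i (Y j i = C_i(S_j));
   - kappa : 'M[R]_m, kappa i j = label of edge C_i -> C_j
     (edge iff kappa i j != 0; labels are positive; no self-loops). *)

Definition valid_labels (R : realFieldType) (m : nat) (kappa : 'M[R]_m) : Prop :=
  (forall i j, 0 <= kappa i j) /\ (forall i, kappa i i = 0).

Definition edge (R : realFieldType) (m : nat) (kappa : 'M[R]_m) : rel 'I_m :=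
  fun i j => kappa i j != 0.

Definition scc (R : realFieldType) (m : nat) (kappa : 'M[R]_m) (i : 'I_m) : {set 'I_m} :=
  [set j | connect (edge kappa) i j && connect (edge kappa) j i].

Definition terminal_set (R : realFieldType) (m : nat) (kappa : 'M[R]_m) (S : {set 'I_m}) : bool :=
  [forall a, forall b, ((a \in S) && edge kappa a b) ==> (b \in S)].

Definition in_terminal_scc (R : realFieldType) (m : nat) (kappa : 'M[R]_m) (i : 'I_m) : bool :=
  terminal_set kappa (scc kappa i).

Definition laplacian (R : realFieldType) (m : nat) (kappa : 'M[R]_m) : 'M[R]_m :=
  \matrix_(j, i) (if j == i then - \sum_(l < m) kappa i l else kappa i j).

Definition Ymx (R : realFieldType) (n m : nat) (Y : 'M[nat]_(n, m)) : 'M[R]_(n, m) :=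
  \matrix_(j, i) (Y j i)%:R.

Definition Mmx (R : realFieldType) (n m : nat) (Y : 'M[nat]_(n, m)) (kappa : 'M[R]_m)
  : 'M[R]_(n, m) := Ymx R Y *m laplacian kappa.

Definition monom (R : realFieldType) (n m : nat) (Y : 'M[nat]_(n, m)) (x : 'I_n -> R)
  (i : 'I_m) : R := \prod_(j < n) x j ^+ Y j i.

Definition Psi (R : realFieldType) (n m : nat) (Y : 'M[nat]_(n, m)) (x : 'I_n -> R)
  : 'cV[R]_m := \col_i monom Y x i.

Definition steady_state (R : realFieldType) (n m : nat) (Y : 'M[nat]_(n, m))
  (kappa : 'M[R]_m) (x : 'I_n -> R) : Prop :=
  (forall j, 0 <= x j) /\ Mmx Y kappa *m Psi Y x = 0.

(* dimension of the (right) kernel {v | A v = 0} *)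
Definition dimker (R : realFieldType) (p m : nat) (A : 'M[R]_(p, m)) : nat :=
  \rank (kermx A^T).

Definition dyn_deficiency (R : realFieldType) (n m : nat) (Y : 'M[nat]_(n, m))
  (kappa : 'M[R]_m) : int :=
  (dimker (Mmx Y kappa))%:Z - (dimker (laplacian kappa))%:Z.

(* type 1 complex-linear invariant on the set S of complexes:
   coefficient vector a is in the row span of M and supported on S *)
Definition type1_invariant (R : realFieldType) (n m : nat) (Y : 'M[nat]_(n, m))
  (kappa : 'M[R]_m) (S : {set 'I_m}) (a : 'rV[R]_m) : Prop :=
  (a <= Mmx Y kappa)%MS /\ (forall l, a 0 l != 0 -> l \in S).

(* Main.v *)
Require Import Defs.
From HB Require Import structures.
From mathcomp Require Import all_boot all_order all_algebra.
Import Order.TTheory GRing.Theory Num.Theory.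
Set Implicit Arguments. Unset Strict Implicit.
Local Open Scope ring_scope.

Lemma scc_self (R : realFieldType) m (kappa : 'M[R]_m) i : i \in scc kappa i.
Proof. by rewrite inE connect0. Qed.

Lemma terminal_edge (R : realFieldType) m (kappa : 'M[R]_m) i j :
  in_terminal_scc kappa i -> edge kappa i j -> in_terminal_scc kappa j.
Proof.
move=> T e.
have : j \in scc kappa i.
  by move/forallP: T => /(_ i)/forallP/(_ j)/implyP; apply; rewrite scc_self e.
rewrite inE => /andP[cij cji].
move: T; rewrite /in_terminal_scc.
suff -> : scc kappa j = scc kappa i by [].
apply/setP=> k; rewrite !inE; apply/andP/andP => [[a b]|[a b]]; split.
- exact: connect_trans cij a.
- exact: connect_trans b cji.
- exact: connect_trans cji a.
- exact: connect_trans b cij.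
Qed.

Lemma reach_terminal (R : realFieldType) m (kappa : 'M[R]_m) i :
  exists2 j, connect (edge kappa) i j & in_terminal_scc kappa j.
Proof.
set e := edge kappa.
pose F j := #|[set k | connect e j k]|.
case: (arg_minnP F (connect0 e i)) => j cij Hmin.
exists j => //.
apply/forallP => a; apply/forallP => b; apply/implyP => /andP[].
rewrite inE => /andP[cja caj] eab.
have cjb : connect e j b by apply: connect_trans cja (connect1 eab).
have sub : [set k | connect e b k] \subset [set k | connect e j k].
  by apply/subsetP => k; rewrite !inE; apply: connect_trans.
have cib : connect e i b by apply: connect_trans cij cjb.
have := Hmin b cib => le.
have /eqP eq : [set k | connect e b k] == [set k | connect e j k].
  by rewrite eqEcard sub.
have : j \in [set k | connect e b k] by rewrite eq inE connect0.
by rewrite !inE cjb => ->.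
Qed.
Lemma lap_col (R : realFieldType) m (kappa : 'M[R]_m) (hk : valid_labels kappa)
  (v : 'cV[R]_m) j :
  (laplacian kappa *m v) j 0 = \sum_i kappa i j * v i 0 - (\sum_l kappa j l) * v j 0.
Proof.
case: hk => k0 kd.
rewrite mxE (bigD1 j) //= mxE eqxx [in RHS](bigD1 j) //= kd mul0r add0r mulNr addrC.
congr (_ + _); apply: eq_bigr => i ij; rewrite mxE eq_sym (negbTE ij) //.
Qed.

Lemma ker_lap (R : realFieldType) m (kappa : 'M[R]_m) (hk : valid_labels kappa)
  (v : 'cV[R]_m) : laplacian kappa *m v = 0 ->
  forall i, ~~ in_terminal_scc kappa i -> v i 0 = 0.
Proof.
move=> Lv.
have bal j : \sum_i kappa i j * v i 0 = (\sum_l kappa j l) * v j 0.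
  by apply/eqP; rewrite -subr_eq0 -(lap_col hk) Lv mxE.
case: (hk) => k0 kd.
pose S := [set i | ~~ in_terminal_scc kappa i && (v i 0 != 0)].
have inS j : j \in S -> \sum_i kappa i j * v i 0 = \sum_(i in S) kappa i j * v i 0.
  move=> jS; rewrite [LHS](bigID (mem S)) /= [X in _ + X]big1 ?addr0 // => i iS.
  case: (boolP (in_terminal_scc kappa i)) => Ti.
    have -> : kappa i j = 0.
      apply/eqP; apply: contraTT jS => e.
      by rewrite inE (terminal_edge Ti e).
    by rewrite mul0r.
  by move: iS; rewrite inE Ti /= negbK => /eqP ->; rewrite mulr0.
have ineq : \sum_(j in S) (\sum_l kappa j l) * `|v j 0|
            <= \sum_(i in S) `|v i 0| * \sum_(j in S) kappa i j.
  rewrite [X in _ <= X](eq_bigr (fun i => \sum_(j in S) `|v i 0| * kappa i j)); last first.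
    by move=> i _; rewrite mulr_sumr.
  rewrite [X in _ <= X]exchange_big /=.
  apply: ler_sum => j jS.
  rewrite -(ger0_norm (sumr_ge0 _ (fun l _ => k0 j l))) -normrM -bal inS //.
  apply: le_trans (ler_norm_sum _ _ _) _.
  by apply: ler_sum => i _; rewrite normrM (ger0_norm (k0 i j)) mulrC.
have split_ : \sum_(i in S) (\sum_l kappa i l) * `|v i 0| =
   \sum_(i in S) `|v i 0| * \sum_(j in S) kappa i j +
   \sum_(i in S) `|v i 0| * \sum_(j | j \notin S) kappa i j.
  rewrite -big_split; apply: eq_bigr => i _.
  by rewrite (bigID (mem S)) /= mulrC mulrDr.
move: ineq; rewrite split_ gerDl => le0.
have H0 : \sum_(i in S) `|v i 0| * \sum_(j | j \notin S) kappa i j = 0.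
  apply/eqP; rewrite eq_le le0 sumr_ge0 // => i _.
  by rewrite mulr_ge0 // sumr_ge0.
have clos i j : i \in S -> edge kappa i j -> j \in S.
  move=> iS e; apply/negPn/negP => jS.
  have := psumr_eq0P _ H0 iS.
  have : `|v i 0| * \sum_(j | j \notin S) kappa i j = 0.
    apply: (psumr_eq0P _ H0 iS) => l _.
    by rewrite mulr_ge0 // sumr_ge0.
  move=> _ /(_ (fun l _ => mulr_ge0 (normr_ge0 _) (sumr_ge0 _ (fun j _ => k0 l j)))).
  move/eqP; rewrite mulf_eq0 normr_eq0.
  move: (iS); rewrite inE => /andP[_ /negbTE ->] /= /eqP.
  move/(psumr_eq0P (fun j _ => k0 i j))/(_ j jS)/eqP.
  by move: e; rewrite /edge => /negbTE ->.
have reach i k : i \in S -> connect (edge kappa) i k -> k \in S.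
  move=> iS /connectP[p pth ->]; elim: p i iS pth => [|a p IH] i iS //=.
  by move=> /andP[e pth]; apply: IH pth; apply: clos e.
move=> i Ti; apply/eqP; apply/negPn/negP => vi.
have iS : i \in S by rewrite inE Ti vi.
case: (reach_terminal kappa i) => j cij Tj.
by have := reach i j iS cij; rewrite inE Tj.
Qed.
Lemma decomp (R : realFieldType) n m (Y : 'M[nat]_(n, m)) (kappa : 'M[R]_m)
  (hdef : dyn_deficiency Y kappa = 1) (chi : 'cV[R]_m)
  (hchiM : Mmx Y kappa *m chi = 0) (hchiL : laplacian kappa *m chi != 0)
  p (W : 'M[R]_(m, p)) : Mmx Y kappa *m W = 0 ->
  exists V (D : 'M[R]_(1, p)), laplacian kappa *m V = 0 /\ W = V + chi *m D.
Proof.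
move=> hW.
set L := laplacian kappa in hchiL *; set M := Mmx Y kappa in hchiM hW *.
set KL := kermx L^T; set KM := kermx M^T.
have dimE : \rank KM = (\rank KL).+1.
  move: hdef; rewrite /dyn_deficiency /dimker -/L -/M -/KL -/KM.
  move/eqP; rewrite subr_eq -PoszD => /eqP [->]; by rewrite add1n.
have sLM : (KL <= KM)%MS.
  apply/sub_kermxP; rewrite /M /Mmx trmx_mul mulmxA -/L mulmx_ker mul0mx //.
have cM : (chi^T <= KM)%MS by apply/sub_kermxP; rewrite -trmx_mul hchiM trmx0.
have cL : ~~ (chi^T <= KL)%MS.
  apply: contra hchiL => /sub_kermxP; rewrite -trmx_mul => /eqP.
  by rewrite trmx_eq0.
have sS : (KL + chi^T <= KM)%MS by rewrite addsmx_sub sLM cM.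
have rS : (\rank KM <= \rank (KL + chi^T)%MS)%N.
  rewrite dimE (ltn_leqif (mxrank_leqif_sup (addsmxSl KL chi^T))).
  by apply: contra cL => h; exact: submx_trans (addsmxSr _ _) h.
have eqS : (KM <= KL + chi^T)%MS by rewrite -(geq_leqif (mxrank_leqif_sup sS)).
have WM : (W^T <= KM)%MS by apply/sub_kermxP; rewrite -trmx_mul hW trmx0.
case/sub_addsmxP: (submx_trans WM eqS) => [[U D]] /= E.
exists (U *m KL)^T, D^T; split.
  have := mulmx_ker L^T; rewrite -/KL => /(congr1 trmx); rewrite trmx_mul trmxK trmx0.
  by move=> H; rewrite trmx_mul mulmxA H mul0mx.
by rewrite -[W]trmxK E linearD /= [X in _ + X]trmx_mul trmxK.
Qed.
Unset Implicit Arguments.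

Theorem mainTheorem4 (R : realFieldType) (n m : nat)
  (Y : 'M[nat]_(n, m)) (kappa : 'M[R]_m)
  (hkappa : valid_labels kappa)
  (hdef : dyn_deficiency Y kappa = 1)
  (hpos : exists xs : 'I_n -> R, (forall j, 0 < xs j) /\ steady_state Y kappa xs)
  (chi : 'cV[R]_m)
  (hchiM : Mmx Y kappa *m chi = 0)
  (hchiL : laplacian kappa *m chi != 0) :
  (forall i, ~~ in_terminal_scc kappa i -> chi i 0 != 0) /\
  (forall i1 i, ~~ in_terminal_scc kappa i1 -> ~~ in_terminal_scc kappa i -> i != i1 ->
     (forall x : 'I_n -> R, steady_state Y kappa x ->
        monom Y x i = chi i 0 / chi i1 0 * monom Y x i1) /\
     type1_invariant Y kappa [set l | ~~ in_terminal_scc kappa l]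
       (\row_l ((l == i)%:R - chi i 0 / chi i1 0 * (l == i1)%:R))).
Proof.
have kerV p (V : 'M[R]_(m, p)) : laplacian kappa *m V = 0 ->
    forall i q, ~~ in_terminal_scc kappa i -> V i q = 0.
  move=> LV i q Ti.
  have := @ker_lap R m kappa hkappa (\col_k V k q) _ i Ti; rewrite mxE; apply.
  apply/matrixP => j z; rewrite !mxE.
  move/matrixP: (LV) => /(_ j q); rewrite !mxE => H; rewrite -[RHS]H.
  by apply: eq_bigr => k _; congr (_ * _); rewrite mxE.
have ss x : steady_state Y kappa x -> exists c,
    forall i, ~~ in_terminal_scc kappa i -> monom Y x i = chi i 0 * c.
  case=> _ hx.
  case: (decomp hdef hchiM hchiL hx) => V [Dm [LV E]].
  exists (Dm 0 0) => i Ti.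
  move/matrixP: E => /(_ i 0); rewrite !mxE (kerV _ _ LV i 0 Ti) add0r.
  by move=> ->; rewrite big_ord1.
have nz : forall i, ~~ in_terminal_scc kappa i -> chi i 0 != 0.
  case: hpos => xs [xpos hxs] i Ti.
  case: (ss xs hxs) => c Hc.
  have : 0 < monom Y xs i by apply: prodr_gt0 => j _; apply: exprn_gt0.
  rewrite Hc //; apply: contraTneq => ->; by rewrite mul0r ltxx.
split => // i1 i T1 Ti ne.
set r := chi i 0 / chi i1 0.
have nz1 := nz i1 T1.
split.
  move=> x /ss [c Hc]; rewrite Hc // Hc // /r mulrA divfK //.
split; last first.
  move=> l; rewrite mxE inE.
  case: (eqVneq l i) => [-> //|li]; case: (eqVneq l i1) => [-> //|li1].
  by rewrite mulr0 subr0 eqxx.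
rewrite submxE; apply/eqP.
have hW := mulmx_coker (Mmx Y kappa).
case: (decomp hdef hchiM hchiL hW) => V [Dm [LV ->]].
set a := \row_l _.
have aV : a *m V = 0.
  apply/matrixP => p q; rewrite !mxE big1 // => l _.
  rewrite mxE; case: (boolP (in_terminal_scc kappa l)) => Tl.
    have -> : l == i = false by apply/negbTE; apply: contraTneq Tl => ->.
    have -> : l == i1 = false by apply/negbTE; apply: contraTneq Tl => ->.
    by rewrite mulr0 subr0 mul0r.
  by rewrite (kerV _ _ LV l q Tl) mulr0.
have ac : a *m chi = 0.
  apply/matrixP => p q; rewrite !ord1 !mxE (bigD1 i) //= (bigD1 i1) 1?eq_sym //=.
  rewrite big1 ?addr0; last first.
    move=> l /andP[li li1]; rewrite mxE (negbTE li) (negbTE li1).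
    by rewrite mulr0 subr0 mul0r.
  rewrite !mxE eqxx (negbTE ne) eq_sym (negbTE ne) eqxx.
  by rewrite mulr0 subr0 sub0r mulr1 mul1r /r mulNr divfK // subrr.
by rewrite mulmxDr aV add0r mulmxA ac mul0mx.
Qed.
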